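(* Let $\mathcal B$ be \textsc{AlternatingOracle}, fix an input and a realization of its random bits, and let $H_{\mathcal B}$ be an eviction graph of $\mathcal B$. Suppose $(a,b_1),\dots,(a,b_d)$ are edges of $H_{\mathcal B}$ such that $(b_1,\dots,b_d)$ is a divisible chain, with $h=d/3$ triples, and let $\psi$ be the maximum of the number of short triples among the first $h/2$ triples (left group) and the number of short triples among the last $h/2$ triples (right group). Then $$\sum_{x=1}^d\eta(b_x)\ge\frac{(d/6-\psi)^2\,k}{20}.$$
   Context: Caching with predictions. Cache of capacity $k$, starting empty; requests $\sigma(1),\dots,\sigma(T)$; $\nu(t)=\min\{s>t:\sigma(s)=\sigma(t)\}$ ($T+1$ if none); prediction $\omega(t)$ of $\nu(t)$ received with request $t$; $\eta(t)=|\nu(t)-\omega(t)|$. Cached pages are identified by the index of their most recent request: $\mathcal I(t)$ is the set of indices $\max\{t'\le t:\sigma(t')=s\}$ over cached pages $s$ after request $t$. \textsc{AlternatingOracle}: on a miss with full cache at time $t$ one of three rules evicts a page: BlindOracle (evict cached $\sigma(i)$, $i\in\mathcal I(t-1)$, with maximal $\omega(i)$); RandomAlg (evict a uniformly random cached page); Corrector (with $W=\{i\in\mathcal I(t-1):\omega(i)<t\}$, evict $\sigma(i)$, $i\in W$, with minimal $\omega(i)$ if $W\ne\emptyset$, otherwise evict as BlindOracle). If $\sigma(t)$ was never requested before, BlindOracle is used; otherwise, if the most recent eviction of page $\sigma(t)$ used BlindOracle / RandomAlg / Corrector, then at time $t$ RandomAlg / Corrector / BlindOracle is used, respectively. Triggering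 and chains: if page $\sigma(i)$ (current index $i$) is evicted and $\nu(i)\le T$, the eviction at time $\nu(i)$ is triggered by it; $(s_1,\dots,s_d)$ is a chain if for each $m<d$, $\sigma(s_{m+1})$ is evicted at time $\nu(s_m)$. Eviction graph: directed graph on $\{1,\dots,T\}$ such that for every edge $(i,j)$ there is a time $t+1$ at which the algorithm evicts $\sigma(j)$, $j\in\mathcal I(t)$, while $i\in\mathcal I(t)$ and $\nu(i)>\nu(j)$; for each $j$ at most one edge $(i,j)$. Triples and divisibility: a chain $(b_1,\dots,b_d)$ is divisible if $d=6m$ for a positive integer $m$ and, for each $i=1,\dots,d/3$, writing $(l_i,c_i,r_i)=(b_{3i-2},b_{3i-1},b_{3i})$ (the $i$-th triple), the page $\sigma(l_i)$ was evicted by the BlindOracle rule, $\sigma(c_i)$ by the RandomAlg rule, and $\sigma(r_i)$ by the Corrector rule. For the $i$-th triple let $L_i=t'-t$, where $t$ is the time of eviction of $\sigma(c_i)$ and $t'$ the time of eviction of $\sigma(r_i)$; the triple is short if $L_i\le k/10$. The left group consists of the first $h/2$ triples and the right group of the last $h/2$ triples, $h=d/3$. *)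

(* Defs.v *)
From mathcomp Require Import all_boot all_order all_algebra.
Set Implicit Arguments. Unset Strict Implicit. Unset Printing Implicit Defensive.
Import Order.TTheory GRing.Theory Num.Theory.

(* Requests are at times 1..T; pages are natural numbers; sigma t is the
   page requested at time t; omega t is the (natural-number) prediction of
   nu t received with request t. *)

(* nu(t) = min{ s > t : sigma s = sigma t }  (T+1 if none), for t <= T *)
Definition nu (T : nat) (sigma : nat -> nat) (t : nat) : nat :=
  t.+1 + find (fun s => sigma s == sigma t) (iota t.+1 (T - t)).

Definition eta (T : nat) (sigma omega : nat -> nat) (t : nat) : nat :=
  (nu T sigma t - omega t) + (omega t - nu T sigma t).

Inductive rule := BlindOracle | RandomAlg | Corrector.

Definition next_rule (r : rule) : rule :=
  match r with
  | BlindOracle => RandomAlg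
  | RandomAlg => Corrector
  | Corrector => BlindOracle
  end.

(* The rule used for the most recent eviction (strictly before time t) of
   page p, if any.  ev s = Some (j, r) means: at time s the page sigma j
   (with current index j) is evicted, using rule r. *)
Definition last_evict_rule (sigma : nat -> nat) (ev : nat -> option (nat * rule))
    (p t : nat) : option rule :=
  foldl (fun acc s => match ev s with
                      | Some (j, r) => if sigma j == p then Some r else acc
                      | None => acc end) None (iota 1 t.-1).

Definition rule_at (sigma : nat -> nat) (ev : nat -> option (nat * rule))
    (t : nat) : rule :=
  if ~~ has (fun s => sigma s == sigma t) (iota 1 t.-1) then BlindOracle
  else match last_evict_rule sigma ev (sigma t) t with
       | Some r => next_rule r
       | None => BlindOracle (* unreachable on a miss *)
       end.

(* j in I is a legal choice of rule r at time t with cached indices I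
   (ties are broken arbitrarily; RandomAlg may pick any cached page, which
   covers every realization of the random bits). *)
Definition blind_ok (omega : nat -> nat) (I : seq nat) (j : nat) : Prop :=
  forall i, i \in I -> omega i <= omega j.

Definition rule_ok (omega : nat -> nat) (t : nat) (I : seq nat) (r : rule)
    (j : nat) : Prop :=
  match r with
  | BlindOracle => blind_ok omega I j
  | RandomAlg => True
  | Corrector =>
      let W := [seq i <- I | omega i < t] in
      if W is [::] then blind_ok omega I j
      else j \in W /\ (forall i, i \in W -> omega j <= omega i)
  end.

(* A run of AlternatingOracle with cache capacity k on sigma(1..T) with
   predictions omega: C t is the set I(t) (as a list of indices) after
   request t; ev t is the eviction performed at time t (if any). *)
Definition alt_oracle_run (k T : nat) (sigma omega : nat -> nat)
    (C : nat -> seq nat) (ev : nat -> option (nat * rule)) : Prop :=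
  C 0 = [::] /\
  (forall t, (t == 0) || (T < t) -> ev t = None) /\
  (forall t, 1 <= t <= T ->
     let I := C t.-1 in
     if has (fun i => sigma i == sigma t) I then
       C t = t :: [seq i <- I | sigma i != sigma t] /\ ev t = None
     else if size I < k then
       C t = t :: I /\ ev t = None
     else exists j,
       [/\ ev t = Some (j, rule_at sigma ev t), j \in I,
           rule_ok omega t I (rule_at sigma ev t) j & C t = t :: rem j I]).

Definition eviction_graph (T : nat) (sigma : nat -> nat) (C : nat -> seq nat)
    (ev : nat -> option (nat * rule)) (H : nat -> nat -> Prop) : Prop :=
  (forall i j, H i j ->
     [/\ 1 <= i <= T, 1 <= j <= T &
      exists t r, [/\ ev t.+1 = Some (j, r), j \in C t, i \in C t &
                      nu T sigma j < nu T sigma i]]) /\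
  (forall i i' j, H i j -> H i' j -> i = i').

Definition is_chain (T : nat) (sigma : nat -> nat)
    (ev : nat -> option (nat * rule)) (b : seq nat) : Prop :=
  forall x, x.+1 < size b ->
    exists r, ev (nu T sigma (nth 0 b x)) = Some (nth 0 b x.+1, r).

Definition evicted_by (ev : nat -> option (nat * rule)) (j : nat) (r : rule) : Prop :=
  exists t, ev t = Some (j, r).

Definition divisible (T : nat) (sigma : nat -> nat)
    (ev : nat -> option (nat * rule)) (b : seq nat) : Prop :=
  is_chain T sigma ev b /\
  (exists m, 0 < m /\ size b = 6 * m) /\
  (forall i, i < size b %/ 3 ->
     [/\ evicted_by ev (nth 0 b (3 * i)) BlindOracle,
         evicted_by ev (nth 0 b (3 * i).+1) RandomAlg &
         evicted_by ev (nth 0 b (3 * i).+2) Corrector]).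

(* time at which index j is evicted (within 1..T; T+1 if never) *)
Definition ev_time (T : nat) (ev : nat -> option (nat * rule)) (j : nat) : nat :=
  (find (fun t => if ev t is Some (j', _) then j' == j else false) (iota 1 T)).+1.

Definition short_triple (k T : nat) (ev : nat -> option (nat * rule))
    (b : seq nat) (i : nat) : bool :=
  (((ev_time T ev (nth 0 b (3 * i).+2))%:R - (ev_time T ev (nth 0 b (3 * i).+1))%:R
    <= k%:R / 10 :> rat))%R.

Definition psi (k T : nat) (ev : nat -> option (nat * rule)) (b : seq nat) : nat :=
  maxn (count (short_triple k T ev b) (iota 0 (size b %/ 6)))
       (count (short_triple k T ev b) (iota (size b %/ 6) (size b %/ 6))).

(* Main.v *)
Require Import Defs.
From mathcomp Require Import all_boot all_order all_algebra.
From mathcomp Require Import zify lra ring.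
Import Order.TTheory GRing.Theory Num.Theory.
Set Implicit Arguments. Unset Strict Implicit.


Lemma step_L k T sigma omega C ev t : alt_oracle_run k T sigma omega C ev ->
  t.+1 <= T -> exists L, [/\ C t.+1 = t.+1 :: L, subseq L (C t) &
    forall x, x \in L -> sigma x != sigma t.+1].
Proof.
move=> [_ [_ Hs]] Ht.
have /= := Hs t.+1 (Ht : 1 <= t.+1 <= T).
case: ifP => Hhas.
  case=> -> _; exists [seq i <- C t | sigma i != sigma t.+1]; split=> //.
    exact: filter_subseq.
  by move=> x; rewrite mem_filter => /andP[].
have Hn: forall x, x \in C t -> sigma x != sigma t.+1.
  move=> x Hx; apply/negP => /eqP E; move/negP: Hhas; apply; apply/hasP.
  by exists x; rewrite // E.
case: ifP => _.
  by case => -> _; exists (C t); split=> //; exact: subseq_refl.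
case=> j [_ _ _ ->]; exists (rem j (C t)); split => //; first exact: rem_subseq.
by move=> x /(mem_subseq (rem_subseq _ _)); exact: Hn.
Qed.

Lemma inv_C k T sigma omega C ev : alt_oracle_run k T sigma omega C ev ->
  forall t, t <= T -> uniq (C t) /\ (forall j, j \in C t -> 0 < j <= t /\
     forall s, j < s <= t -> sigma s != sigma j).
Proof.
move=> Hr; elim=> [|t IH] Ht.
  by case: (Hr) => -> _.
have [uC HC] := IH (ltnW Ht).
have [L [E Hsub Hne]] := step_L Hr Ht.
rewrite E; split.
  rewrite /= (subseq_uniq Hsub uC) andbT.
  by apply/negP => /(mem_subseq Hsub) /HC; lia.
move=> j; rewrite inE => /orP[/eqP->|Hj]; first by split=> //; lia.
have HjC := mem_subseq Hsub Hj.
have [Hj1 Hj2] := HC j HjC.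
split; first lia.
move=> s Hs; case: (ltnP s t.+1) => Hst.
  by apply: Hj2; lia.
have -> : s = t.+1 by lia.
by rewrite eq_sym; exact: Hne.
Qed.

Lemma sub_step k T sigma omega C ev t x : alt_oracle_run k T sigma omega C ev ->
  t.+1 <= T -> x \in C t.+1 -> x = t.+1 \/ x \in C t.
Proof.
move=> Hr Ht; have [L [E Hsub _]] := step_L Hr Ht.
rewrite E inE => /orP[/eqP->|H]; [by left | right].
exact: (mem_subseq Hsub).
Qed.

Lemma nu_gt k T sigma omega C ev t j : alt_oracle_run k T sigma omega C ev ->
  t <= T -> j \in C t -> t < nu T sigma j.
Proof.
move=> Hr Ht Hj.
have [_ HC] := inv_C Hr Ht; have [Hj1 Hj2] := HC j Hj.
rewrite /nu.
set P := (fun s => sigma s == sigma j).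
case: (leqP (t - j) (find P (iota j.+1 (T - j)))) => Hf; first lia.
have Hh : has P (iota j.+1 (T - j)) by rewrite has_find size_iota; lia.
have := nth_find 0 Hh; rewrite nth_iota; last by move: Hh; rewrite has_find size_iota.
rewrite /P => /eqP E.
have := Hj2 (j.+1 + find P (iota j.+1 (T - j))); rewrite E eqxx; lia.
Qed.

Lemma evict_in k T sigma omega C ev t j r : alt_oracle_run k T sigma omega C ev ->
  ev t = Some (j, r) ->
  [/\ 1 <= t <= T, j \in C t.-1, rule_ok omega t (C t.-1) r j &
      C t = t :: rem j (C t.-1)].
Proof.
move=> Hr Hev; case: (Hr) => _ [H0 Hs].
have Ht : 1 <= t <= T.
  case: (boolP ((t == 0) || (T < t))) => [/H0|]; first by rewrite Hev.
  by rewrite negb_or -leqNgt => /andP[? ?]; apply/andP; split; [rewrite lt0n|].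

have /= := Hs t Ht.
case: ifP => _; first by case=> _; rewrite Hev.
case: ifP => _; first by case=> _; rewrite Hev.
case=> j' [E Hj' Hok HC]; move: E; rewrite Hev => -[Ej Er]; subst j' r.
by split.
Qed.

Lemma not_after k T sigma omega C ev t1 j r : alt_oracle_run k T sigma omega C ev ->
  ev t1 = Some (j, r) -> forall t, t1 <= t <= T -> j \notin C t.
Proof.
move=> Hr Hev; have [Ht1 Hj _ HC] := evict_in Hr Hev.
elim=> [|t IH]; first lia.
move=> /andP[H1 H2].
case: (ltnP t1 t.+1) => H3.
  apply/negP => /(sub_step Hr H2) [E|Hjt].
    have [_ Hinv] := inv_C (t:=t1.-1) Hr ltac:(lia).
    have := Hinv j Hj; lia.
  by move/negP: (IH ltac:(lia)); apply.
have Et : t.+1 = t1 by lia.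
rewrite Et HC inE negb_or; apply/andP; split.
  have [_ Hinv] := inv_C (t:=t1.-1) Hr ltac:(lia).
  have := Hinv j Hj => -[? _]; apply/eqP; lia.
have [uC _] := inv_C (t:=t1.-1) Hr ltac:(lia).
by rewrite (mem_rem_uniq _ uC) inE eqxx.
Qed.

Lemma ev_uniq k T sigma omega C ev t1 t2 j r1 r2 : alt_oracle_run k T sigma omega C ev ->
  ev t1 = Some (j, r1) -> ev t2 = Some (j, r2) -> t1 = t2.
Proof.
have key : forall u1 u2 r1' r2', alt_oracle_run k T sigma omega C ev ->
  ev u1 = Some (j, r1') -> ev u2 = Some (j, r2') -> u1 < u2 -> False.
  move=> u1 u2 r1' r2' Hr E1 E2 Hlt.
  have [Ht2 Hj _ _] := evict_in Hr E2.
  by move: (not_after Hr E1 (t := u2.-1)) => /(_ ltac:(lia)); rewrite Hj.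
move=> Hr E1 E2.
case: (ltngtP t1 t2) => // H; [exfalso; exact: (key _ _ _ _ Hr E1 E2 H)|].
exfalso; exact: (key _ _ _ _ Hr E2 E1 H).
Qed.

Lemma ev_time_eq k T sigma omega C ev s j r : alt_oracle_run k T sigma omega C ev ->
  ev s = Some (j, r) -> ev_time T ev j = s.
Proof.
move=> Hr Hev; have [Hs _ _ _] := evict_in Hr Hev.
rewrite /ev_time.
set P := (fun t => if ev t is Some (j', _) then j' == j else false).
have Hh : has P (iota 1 T).
  apply/hasP; exists s; first by rewrite mem_iota; lia.
  by rewrite /P Hev.
have := nth_find 0 Hh; rewrite nth_iota; last by move: Hh; rewrite has_find size_iota.
rewrite /P; case E: (ev _) => [[j' r']|] // /eqP Ej; subst j'.
have := ev_uniq Hr E Hev; lia.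
Qed.


Definition nsh (k : nat) (u v : nat -> nat) (i : nat) : bool := k < 10 * (u i - v i).

Lemma R1 k u v w a p :
  (forall i, a <= i < a + p.+1 -> v i <= u i) ->
  (forall i, a <= i -> i.+1 < a + p.+1 -> u i <= v i.+1) ->
  (forall i, a <= i < a + p.+1 -> w <= v i) ->
  k * count (nsh k u v) (iota a p.+1) <= 10 * (u (a + p) - w).
Proof.
elim: p => [|p IH] Hvu Huv Hw.
  rewrite /= !addn0 /nsh; have := Hvu a; have := Hw a.
  case: (ltnP k (10 * (u a - v a))) => /= H1 H2 H3; lia.
rewrite (_ : iota a p.+2 = iota a p.+1 ++ [:: a + p.+1]); last by rewrite -addn1 iotaD.
rewrite count_cat /= addn0 mulnDr.
have IH' := IH (fun i h => Hvu i ltac:(lia)) (fun i h1 h2 => Huv i h1 ltac:(lia))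
  (fun i h => Hw i ltac:(lia)).
move: (k * count _ (iota a p.+1)) IH' => X IH'.
have := Hvu (a + p); have := Hvu (a + p.+1); have := Huv (a + p); have := Hw (a + p).
rewrite /nsh (addnS a p).
case: (ltnP k (10 * (u (a+p).+1 - v (a+p).+1))) => /= H1 H2 H3 H4 H5; lia.
Qed.

Lemma R2 k u v w a p :
  (forall i, a <= i < a + p -> v i <= u i) ->
  (forall i, a <= i -> i.+1 < a + p -> u i <= v i.+1) ->
  (forall i, a <= i < a + p -> w <= v i) ->
  k * count (nsh k u v) (iota a p) * (count (nsh k u v) (iota a p)).+1
    <= 20 * \sum_(a <= i < a + p) (u i - w).
Proof.
elim: p => [|p IH] Hvu Huv Hw; first by rewrite /= muln0 mul0n.
have IH' := IH (fun i h => Hvu i ltac:(lia)) (fun i h1 h2 => Huv i h1 ltac:(lia))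
  (fun i h => Hw i ltac:(lia)).
have R := @R1 k u v w a p Hvu Huv Hw.
rewrite (_ : iota a p.+1 = iota a p ++ [:: a + p]) in R *; last by rewrite -addn1 iotaD.
rewrite addnS big_nat_recr ?leq_addr //= count_cat /= addn0 in R *.
move: IH' R; set c := count _ (iota a p); set S := \sum_(_ <= _ < _) _.
move: (nsh k u v (a + p)) => [|] /= H1 H2.
  rewrite !addn1 mulnDr mulnS; nia.
rewrite !addn0; lia.
Qed.

Lemma L1 k u v w a p :
  (forall i, a <= i < a + p.+1 -> v i <= u i) ->
  (forall i, a <= i -> i.+1 < a + p.+1 -> u i <= v i.+1) ->
  (forall i, a <= i < a + p.+1 -> u i <= w) ->
  k * count (nsh k u v) (iota a p.+1) <= 10 * (w - v a).
Proof.
elim: p a => [|p IH] a Hvu Huv Hw.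
  rewrite /= /nsh; have := Hvu a; have := Hw a.
  case: (ltnP k (10 * (u a - v a))) => /= H1 H2 H3; lia.
have := IH a.+1 (fun i h => Hvu i ltac:(lia)) (fun i h1 h2 => Huv i ltac:(lia) ltac:(lia))
  (fun i h => Hw i ltac:(lia)).
rewrite [iota a _]/= [count _ (_ :: _)]/= /nsh.
have := Hvu a; have := Hvu a.+1; have := Huv a; have := Hw a; have := Hw a.+1.
rewrite mulnDr; move: (k * count _ _) => X.
case: (ltnP k (10 * (u a - v a))) => /= H1 H2 H3 H4 H5 H6 IH'; lia.
Qed.

Lemma L2 k u v w a p :
  (forall i, a <= i < a + p -> v i <= u i) ->
  (forall i, a <= i -> i.+1 < a + p -> u i <= v i.+1) ->
  (forall i, a <= i < a + p -> u i <= w) ->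
  k * count (nsh k u v) (iota a p) * (count (nsh k u v) (iota a p)).+1
    <= 20 * \sum_(a <= i < a + p) (w - v i).
Proof.
elim: p a => [|p IH] a Hvu Huv Hw; first by rewrite /= muln0 mul0n.
have := IH a.+1 (fun i h => Hvu i ltac:(lia)) (fun i h1 h2 => Huv i ltac:(lia) ltac:(lia))
  (fun i h => Hw i ltac:(lia)).
have R := @L1 k u v w a p Hvu Huv Hw.
move=> IH'; clear IH.
rewrite addnS big_ltn ?ltnS ?leq_addr // -addSn [iota a _]/= [count _ (_ :: _)]/=.
move: IH'; set c := count _ (iota a.+1 p); set S := \sum_(_ <= _ < _) _ => IH.
move: R; rewrite [iota a _]/= [count _ (_ :: _)]/= -/c.
move: (nsh k u v a) => [|] /= H1.
  rewrite !add1n mulnDr mulnS; nia.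
rewrite !add0n; lia.
Qed.


Lemma short_iff (U V k : nat) :
  ((U%:R - V%:R <= k%:R / 10 :> rat)%R) = (10 * (U - V) <= k).
Proof.
rewrite ler_pdivlMr ?ltr0n //.
case: (leqP V U) => H.
  by rewrite -natrB // -(natrM _ (U - V) 10) ler_nat mulnC.
have -> : (U - V = 0)%N by lia.
rewrite muln0 leq0n.
have H1 : (U%:R < V%:R :> rat)%R by rewrite ltr_nat.
have H2 : (0 <= k%:R :> rat)%R by exact: ler0n.
apply/idP; lra.
Qed.

Lemma sum3 (f : nat -> nat) n :
  \sum_(0 <= i < n) (f (3*i) + f (3*i).+2) <= \sum_(0 <= x < 3*n) f x.
Proof.
elim: n => [|n IH]; first by rewrite !big_geq.
rewrite big_nat_recr // (_ : 3 * n.+1 = (3 * n).+3); last by lia.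
rewrite !big_nat_recr //=; lia.
Qed.

Lemma info k T sigma omega C ev H a j r :
  alt_oracle_run k T sigma omega C ev -> eviction_graph T sigma C ev H ->
  H a j -> evicted_by ev j r ->
  exists s, [/\ ev s = Some (j, r), ev_time T ev j = s, 0 < s <= T,
    a \in C s.-1 & j \in C s.-1 /\ rule_ok omega s (C s.-1) r j].
Proof.
move=> Hr [He _] Haj [s Hs].
have [_ _ [t [r' [E1 _ Hat _]]]] := He _ _ Haj.
have Est := ev_uniq Hr E1 Hs.
have [Hs1 Hj Hok _] := evict_in Hr Hs.
exists s; split => //; first exact: ev_time_eq Hr Hs.
by rewrite -Est.
Qed.

Lemma nu_ge k T sigma omega C ev s j :
  alt_oracle_run k T sigma omega C ev -> j \in C s.-1 -> 0 < s <= T ->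
  s <= nu T sigma j.
Proof.
move=> Hr Hj Hs; have := nu_gt Hr (t := s.-1) ltac:(lia) Hj; lia.
Qed.

Lemma chain_time k T sigma omega C ev b x :
  alt_oracle_run k T sigma omega C ev -> is_chain T sigma ev b -> x.+1 < size b ->
  ev_time T ev (nth 0 b x.+1) = nu T sigma (nth 0 b x).
Proof.
move=> Hr Hch Hx; have [r E] := Hch x Hx; exact: ev_time_eq Hr E.
Qed.


Lemma main_nat k T sigma omega C ev H a b :
  alt_oracle_run k T sigma omega C ev ->
  eviction_graph T sigma C ev H ->
  (forall x, x \in b -> H a x) ->
  divisible T sigma ev b ->
  exists m, [/\ size b = 6 * m, psi k T ev b <= m &
    k * (m - psi k T ev b) ^ 2 <= 20 * \sum_(x < size b) eta T sigma omega (nth 0 b x)].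
Proof.
move=> Hr HG Hb [Hch [[m [m0 Hsz]] Hrl]].
set w := omega a.
set v := fun i => ev_time T ev (nth 0 b (3*i).+1).
set u := fun i => ev_time T ev (nth 0 b (3*i).+2).
have Hd3 : size b %/ 3 = 2 * m by rewrite Hsz (_ : 6 * m = (2 * m) * 3) ?mulnK //; lia.
have Hd6 : size b %/ 6 = m by rewrite Hsz mulKn.
have Hab : forall x, x < size b -> H a (nth 0 b x) := fun x hx => Hb _ (mem_nth 0 hx).
have F : forall i, i < 2 * m -> [/\ v i <= u i, (i.+1 < 2 * m -> u i <= v i.+1),
    w - v i <= eta T sigma omega (nth 0 b (3*i)) &
    u i - w <= eta T sigma omega (nth 0 b (3*i).+2)].
  move=> i Hi; have [Bl Rc Co] := Hrl i ltac:(by rewrite Hd3).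
  have [sl [El Etl Hsl Hal [Hl Okl]]] := info Hr HG (Hab (3*i) ltac:(lia)) Bl.
  have [sc [Ec Etc Hsc Hac [Hc Okc]]] := info Hr HG (Hab (3*i).+1 ltac:(lia)) Rc.
  have [sr [Er Etr Hsr Har [Hrr Okr]]] := info Hr HG (Hab (3*i).+2 ltac:(lia)) Co.
  have Vi : v i = nu T sigma (nth 0 b (3*i)) := chain_time Hr Hch (x := 3*i) ltac:(lia).
  have Ui : u i = nu T sigma (nth 0 b (3*i).+1) := chain_time Hr Hch (x := (3*i).+1) ltac:(lia).
  have Vc : v i = sc by [].
  have Ur : u i = sr by [].
  have Nc := nu_ge Hr Hc Hsc.
  have Nr := nu_ge Hr Hrr Hsr.
  split.
  - lia.
  - move=> Hi1.
    have [Bl' _ _] := Hrl i.+1 ltac:(by rewrite Hd3).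
    have [sl' [El' Etl' Hsl' Hal' [Hl' Okl']]] := info Hr HG (Hab (3*i.+1) ltac:(lia)) Bl'.
    have Nl' := nu_ge Hr Hl' Hsl'.
    have E3 : 3 * i.+1 = ((3*i).+2).+1 by lia.
    have C1 : ev_time T ev (nth 0 b (3*i.+1)) = nu T sigma (nth 0 b (3*i).+2).
      by rewrite E3; apply: chain_time Hr Hch _; lia.
    have C2 : v i.+1 = nu T sigma (nth 0 b (3*i.+1)).
      by apply: chain_time Hr Hch _; lia.
    lia.
  - have := Okl a Hal; rewrite /eta -/w; lia.
  - case: (ltnP w sr) => Hw; last lia.
    move: Okr; rewrite /rule_ok /=.
    have Ha : a \in [seq j <- C sr.-1 | omega j < sr] by rewrite mem_filter Hw Har.
    move: Ha; case: [seq _ <- _ | _] => [|x W'] //.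
    move=> Ha [_ Hmin]; have := Hmin a Ha; rewrite /eta -/w; lia.
have mono : forall i j, i <= j -> j < 2 * m -> v i <= v j.
  move=> i j Hij; elim: j Hij => [|j IH] Hij Hj; first by have -> : i = 0 by lia.
  case: (ltnP i j.+1) => H1; last by have -> : i = j.+1 by lia.
  have [A1 B1 _ _] := F j ltac:(lia).
  have := IH ltac:(lia) ltac:(lia); have := B1 Hj; lia.
set E := \sum_(x < size b) _.
have HE : \sum_(0 <= i < 2 * m) (eta T sigma omega (nth 0 b (3*i)) +
             eta T sigma omega (nth 0 b (3*i).+2)) <= E.
  rewrite /E -(big_mkord xpredT (fun x => eta T sigma omega (nth 0 b x))) Hsz (_ : 6 * m = 3 * (2 * m)); last by lia.
  exact: (sum3 (fun x => eta T sigma omega (nth 0 b x))).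
rewrite big_split /= (@big_cat_nat _ _ _ m) /= in HE; try lia.
rewrite (@big_cat_nat _ _ _ m _ _ _ (fun i => eta T sigma omega (nth 0 b (3 * i).+2))) /= in HE; try lia.
have Hshort : forall i, short_triple k T ev b i = ~~ nsh k u v i.
  by move=> i; rewrite /short_triple short_iff /nsh -leqNgt.
have Hpsi : psi k T ev b <= m.
  rewrite /psi Hd6 geq_max; apply/andP; split;
    by apply: leq_trans (count_size _ _) _; rewrite size_iota.
have Hcnt : forall s, count (nsh k u v) s + count (short_triple k T ev b) s = size s.
  move=> s; rewrite -(count_predC (nsh k u v) s); congr (_ + _).
  by apply: eq_count => i; rewrite Hshort.
exists m; split => //.
case: (leqP w (v m)) => Hw.
  have R := @R2 k u v w m m.
  have HL : forall i, m <= i < m + m -> v i <= u i.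
    by move=> i Hi; have [] := F i ltac:(lia).
  have HU : forall i, m <= i -> i.+1 < m + m -> u i <= v i.+1.
    by move=> i H1 H2; have [_ B _ _] := F i ltac:(lia); apply: B; lia.
  have HW : forall i, m <= i < m + m -> w <= v i.
    by move=> i Hi; have := mono m i ltac:(lia) ltac:(lia); lia.
  have {}R := R HL HU HW.
  have S : \sum_(m <= i < m + m) (u i - w) <=
           \sum_(m <= i < 2 * m) eta T sigma omega (nth 0 b (3 * i).+2).
    rewrite (_ : 2 * m = m + m); last by lia.
    rewrite big_nat_cond [X in _ <= X]big_nat_cond; apply: leq_sum => i /andP[Hi _].
    by have [_ _ _ D] := F i ltac:(lia).
  have Hc := Hcnt (iota m m); rewrite size_iota in Hc.
  have Hp : count (short_triple k T ev b) (iota m m) <= psi k T ev b.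
    by rewrite /psi Hd6 leq_max orbC leqnn.
  move: R S Hc Hp HE; set c := count (nsh k u v) _; move: (\sum_(_ <= _ < _) _) => S1.
  move: (\sum_(_ <= _ < _ + _) _) => S2; move: (\sum_(_ <= _ < _) _) => S3.
  move: (\sum_(_ <= _ < _) _) => S4.
  move=> R S Hc Hp HE.
  have : m - psi k T ev b <= c by lia.
  move: (m - psi k T ev b) => q Hq.
  have : k * q ^ 2 <= k * c * c.+1.
    rewrite -mulnA leq_mul2l expnS expn1; apply/orP; right.
    by apply: leq_mul => //; lia.
  lia.
have R := @L2 k u v w 0 m.
have HL : forall i, 0 <= i < 0 + m -> v i <= u i.
  by move=> i Hi; have [] := F i ltac:(lia).
have HU : forall i, 0 <= i -> i.+1 < 0 + m -> u i <= v i.+1.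
  by move=> i H1 H2; have [_ B _ _] := F i ltac:(lia); apply: B; lia.
have HW : forall i, 0 <= i < 0 + m -> u i <= w.
  move=> i Hi; have [_ B _ _] := F i ltac:(lia).
  have := B ltac:(lia); have := mono i.+1 m ltac:(lia) ltac:(lia); lia.
have {}R := R HL HU HW.
have S : \sum_(0 <= i < 0 + m) (w - v i) <=
         \sum_(0 <= i < m) eta T sigma omega (nth 0 b (3 * i)).
  rewrite add0n big_nat_cond [X in _ <= X]big_nat_cond; apply: leq_sum => i /andP[Hi _].
  by have [_ _ HC _] := F i ltac:(lia).
have Hc := Hcnt (iota 0 m); rewrite size_iota in Hc.
have Hp : count (short_triple k T ev b) (iota 0 m) <= psi k T ev b.
  by rewrite /psi Hd6 leq_max leqnn.
move: R S Hc Hp HE; set c := count (nsh k u v) _; move: (\sum_(_ <= _ < _ + _) _) => S1.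
move: (\sum_(_ <= _ < _) _) => S2; move: (\sum_(_ <= _ < _) _) => S3.
move: (\sum_(_ <= _ < _) _) => S4.
move=> R S Hc Hp HE.
have : m - psi k T ev b <= c by lia.
move: (m - psi k T ev b) => q Hq.
have : k * q ^ 2 <= k * c * c.+1.
  rewrite -mulnA leq_mul2l expnS expn1; apply/orP; right.
  by apply: leq_mul => //; lia.
lia.
Qed.

Unset Implicit Arguments.
Local Open Scope ring_scope.

Theorem mainTheorem10 (k T : nat) (sigma omega : nat -> nat)
    (C : nat -> seq nat) (ev : nat -> option (nat * rule))
    (H : nat -> nat -> Prop) (a : nat) (b : seq nat) :
  alt_oracle_run k T sigma omega C ev ->
  eviction_graph T sigma C ev H ->
  (forall x, x \in b -> H a x) ->
  divisible T sigma ev b ->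
  ((size b)%:R / 6 - (psi k T ev b)%:R) ^+ 2 * k%:R / 20
    <= \sum_(x < size b) ((eta T sigma omega (nth 0%N b x))%:R : rat).
Proof.
move=> Hr HG Hb Hd.
have [m [Hsz Hp Hm]] := main_nat Hr HG Hb Hd.
rewrite -natr_sum {1}Hsz.
have -> : ((6 * m)%:R / 6 : rat) = m%:R.
  by rewrite natrM; field.
rewrite -natrB // -natrX -natrM ler_pdivrMr ?ltr0n // -(natrM _ _ 20) ler_nat.
by move: Hm; rewrite mulnC (mulnC 20).

Qed.
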